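(* Let $F$ be a finitely generated free group and let $\phi : F \to F$ be an endomorphism (not necessarily injective). Then there exist a finitely generated free group $F_1$ and an injective endomorphism $\psi : F_1 \to F_1$ such that $M(\phi) \cong M(\psi)$.
   Context: For a group $G$ and an endomorphism $\phi : G \to G$ (not necessarily injective), the mapping torus group is $M(\phi) = \langle G, t \mid t^{-1} g t = \phi(g),\ g \in G \rangle$, i.e. the quotient of the free product $G * \langle t \rangle$ by the normal closure of all elements $t^{-1} g t\, \phi(g)^{-1}$, $g \in G$. *)

(* Defs.v *)
From mathcomp Require Import all_boot.
From Stdlib Require Import ClassicalEpsilon PropExtensionality
  FunctionalExtensionality ProofIrrelevance.

Set Implicit Arguments.
Unset Strict Implicit.
Unset Printing Implicit Defensive.

Record group := Group {
  gcar :> Type;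
  gmul : gcar -> gcar -> gcar;
  ginv : gcar -> gcar;
  gone : gcar;
  gmulA : forall x y z, gmul x (gmul y z) = gmul (gmul x y) z;
  gmul1 : forall x, gmul gone x = x;
  gmulV : forall x, gmul (ginv x) x = gone }.

Record hom (G H : group) := Hom {
  hfun :> G -> H;
  hmul : forall x y, hfun (gmul x y) = gmul (hfun x) (hfun y) }.

Definition isomorphic (G H : group) : Prop :=
  exists f : hom G H, bijective f.

Section Presentation.
Variable X : Type.

(* a letter (x, false) is the generator x, (x, true) is x^{-1} *)
Definition letter := (X * bool)%type.
Definition word := seq letter.
Definition flip (x : letter) : letter := (x.1, ~~ x.2).
Definition winv (w : word) : word := rev (map flip w).

Variable R : word -> word -> Prop.

Inductive weq : word -> word -> Prop :=
| weq_refl w : weq w w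
| weq_sym u v : weq u v -> weq v u
| weq_trans u v w : weq u v -> weq v w -> weq u w
| weq_cancel u x v : weq (u ++ x :: flip x :: v) (u ++ v)
| weq_rel u a b v : R a b -> weq (u ++ a ++ v) (u ++ b ++ v).

Lemma flipK x : flip (flip x) = x.
Proof. by case: x => a b; rewrite /flip /= negbK. Qed.

Lemma weq_ctx u v a b : weq a b -> weq (u ++ a ++ v) (u ++ b ++ v).
Proof.
elim=> [w|a' b' _ IH|a' b' c' _ IH1 _ IH2|u0 x v0|u0 a0 b0 v0 Hr].
- exact: weq_refl.
- exact: weq_sym.
- exact: weq_trans IH1 IH2.
- have -> : u ++ (u0 ++ x :: flip x :: v0) ++ v
            = (u ++ u0) ++ x :: flip x :: (v0 ++ v) by rewrite -!catA.
  have -> : u ++ (u0 ++ v0) ++ v = (u ++ u0) ++ (v0 ++ v) by rewrite -!catA.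
  exact: weq_cancel.
- have -> : u ++ (u0 ++ a0 ++ v0) ++ v = (u ++ u0) ++ a0 ++ (v0 ++ v)
    by rewrite -!catA.
  have -> : u ++ (u0 ++ b0 ++ v0) ++ v = (u ++ u0) ++ b0 ++ (v0 ++ v)
    by rewrite -!catA.
  exact: weq_rel.
Qed.

Lemma winv_cancel w : weq (winv w ++ w) [::].
Proof.
elim: w => [|x w IH] /=; first exact: weq_refl.
have -> : winv (x :: w) ++ x :: w = winv w ++ flip x :: flip (flip x) :: w.
  by rewrite /winv /= rev_cons -cats1 -catA flipK.
exact: weq_trans (weq_cancel _ _ _) IH.
Qed.

Definition pres := {P : word -> Prop | exists w, P = weq w}.
Definition cls (w : word) : pres := exist _ (weq w) (ex_intro _ w erefl).
Definition repr (A : pres) : word :=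
  proj1_sig (constructive_indefinite_description _ (proj2_sig A)).

Lemma eq_pres (A B : pres) : proj1_sig A = proj1_sig B -> A = B.
Proof.
case: A => P HP; case: B => Q HQ /= E; subst Q; f_equal; exact: proof_irrelevance.
Qed.

Lemma reprK A : cls (repr A) = A.
Proof.
apply: eq_pres; rewrite /repr.
case: (constructive_indefinite_description _ _) => w Hw /=.
by rewrite Hw.
Qed.

Lemma cls_eq u v : weq u v -> cls u = cls v.
Proof.
move=> H; apply: eq_pres => /=; apply: functional_extensionality => w.
apply: propositional_extensionality; split=> H'.
- exact: weq_trans (weq_sym H) H'.
- exact: weq_trans H H'.
Qed.

Lemma repr_cls w : weq (repr (cls w)) w.
Proof.
have E : proj1_sig (cls (repr (cls w))) = proj1_sig (cls w) by rewrite reprK.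
simpl in E; apply: weq_sym; rewrite -E; exact: weq_refl.
Qed.

Definition pmul (A B : pres) : pres := cls (repr A ++ repr B).
Definition pinv (A : pres) : pres := cls (winv (repr A)).
Definition pone : pres := cls [::].

Lemma pmul_cls u v : pmul (cls u) (cls v) = cls (u ++ v).
Proof.
apply: cls_eq; apply: weq_trans (_ : weq (u ++ repr (cls v)) _).
- exact: (weq_ctx [::] (repr (cls v)) (repr_cls u)).
- rewrite -[u ++ repr _]cats0 -[u ++ v]cats0 -!catA.
  exact: (weq_ctx u [::] (repr_cls v)).
Qed.

Lemma pmulA (A B C : pres) : pmul A (pmul B C) = pmul (pmul A B) C.
Proof.
rewrite -(reprK A) -(reprK B) -(reprK C) !pmul_cls; by rewrite catA.
Qed.

Lemma pmul1 (A : pres) : pmul pone A = A.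
Proof. by rewrite -(reprK A) /pone pmul_cls. Qed.

Lemma pmulV (A : pres) : pmul (pinv A) A = pone.
Proof.
rewrite /pinv -{2}(reprK A) pmul_cls; apply: cls_eq; exact: winv_cancel.
Qed.

Definition presented_group : group :=
  @Group pres pmul pinv pone pmulA pmul1 pmulV.

End Presentation.

Definition freegrp (n : nat) : group :=
  presented_group (fun _ _ : word 'I_n => False).

Definition fg_free (G : group) : Prop := exists n, isomorphic G (freegrp n).

(* Mapping torus  M(phi) = < G, t | t^{-1} g t = phi(g), g in G >.     *)
(* Generators: Some g (the element g of G) and None (the letter t).    *)
(* Relations: the multiplication table of G (so that the group on      *)
(* generators G, t with these relations alone is the free product      *)
(* G * <t>) together with t^{-1} g t = phi(g) for every g in G.        *)
Definition mt_rel (G : group) (phi : G -> G) (u v : word (option G)) : Prop :=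
  (exists g h : G, u = [:: (Some g, false); (Some h, false)]
                /\ v = [:: (Some (gmul g h), false)])
  \/ (exists g : G, u = [:: (None, true); (Some g, false); (None, false)]
                 /\ v = [:: (Some (phi g), false)]).

Definition mapping_torus (G : group) (phi : hom G G) : group :=
  presented_group (mt_rel (hfun phi)).

(* Main.v *)
Require Import Defs.
From mathcomp Require Import all_boot.
From Stdlib Require Import Classical Lia.
From mathcomp Require Import zify.

Set Implicit Arguments.
Unset Strict Implicit.
Unset Printing Implicit Defensive.

Section GroupTh.
Variable G : group.
Implicit Types x y z : G.

Lemma gmulVr x : gmul x (ginv x) = (gone _).
Proof.
by rewrite -[LHS]gmul1 -(gmulV (ginv x)) -gmulA (gmulA (ginv x) x) gmulV gmul1.
Qed.

Lemma gmul1r x : gmul x (gone _) = x.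
Proof. by rewrite -(gmulV x) gmulA gmulVr gmul1. Qed.

Lemma gcancel x y z : gmul x y = gmul x z -> y = z.
Proof.
move=> H; rewrite -(gmul1 y) -(gmul1 z) -(gmulV x) -!gmulA H //.
Qed.

Lemma ginv_uniq x y : gmul y x = (gone _) -> y = ginv x.
Proof.
move=> H; rewrite -(gmul1r y) -(gmulVr x) gmulA H gmul1 //.
Qed.

Lemma ginv_mul x y : ginv (gmul x y) = gmul (ginv y) (ginv x).
Proof.
symmetry; apply: ginv_uniq.
by rewrite -gmulA (gmulA (ginv x)) gmulV gmul1 gmulV.
Qed.

Lemma ginvK x : ginv (ginv x) = x.
Proof. symmetry; apply: ginv_uniq; exact: gmulVr. Qed.

Lemma ginv1 : ginv (gone G) = (gone _).
Proof. symmetry; apply: ginv_uniq; exact: gmul1. Qed.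

Lemma gmulKV x y : gmul (ginv x) (gmul x y) = y.
Proof. by rewrite gmulA gmulV gmul1. Qed.

Lemma gmulVK x y : gmul x (gmul (ginv x) y) = y.
Proof. by rewrite gmulA gmulVr gmul1. Qed.

End GroupTh.

Section HomTh.
Variables G H : group.
Variable h : hom G H.

Lemma hom1 : h (gone _) = (gone _).
Proof.
apply: (@gcancel _ (h (gone _))); rewrite -hmul gmul1 gmul1r //.
Qed.

Lemma homV x : h (ginv x) = ginv (h x).
Proof. apply: ginv_uniq; by rewrite -hmul gmulV hom1. Qed.

End HomTh.

Definition hcomp (G H K : group) (g : hom H K) (f : hom G H) : hom G K.
Proof. refine (@Hom G K (fun x => g (f x)) _); by move=> x y; rewrite !hmul. Defined.

Definition hid (G : group) : hom G G.
Proof. by refine (@Hom G G (fun x => x) _). Defined.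

Lemma isomorphic_trans (G H K : group) :
  isomorphic G H -> isomorphic H K -> isomorphic G K.
Proof.
move=> [f bf] [g bg]; exists (hcomp g f); exact: bij_comp bg bf.
Qed.

Lemma isomorphic_refl (G : group) : isomorphic G G.
Proof. exists (hid G); by exists id. Qed.

Definition hinv (G H : group) (f : hom G H) (g : H -> G)
  (fg : cancel g f) (gf : cancel f g) : hom H G.
Proof.
refine (@Hom H G g _) => x y.
by rewrite -{1}(fg x) -{1}(fg y) -hmul gf.
Defined.

Section Pres.
Variable X : Type.
Variable R : word X -> word X -> Prop.
Local Notation P := (presented_group R).

Lemma cls_cat u v : cls R (u ++ v) = gmul (cls R u : P) (cls R v).
Proof. by rewrite /= pmul_cls. Qed.

Lemma cls_nil : cls R [::] = ((gone _) : P).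
Proof. by []. Qed.

Lemma cls_flip l : cls R [:: flip l] = ginv (cls R [:: l] : P).
Proof.
apply: (@ginv_uniq P); rewrite /= pmul_cls /=.
have := weq_cancel R [::] (flip l) [::]; rewrite flipK /= => H.
exact: cls_eq H.
Qed.

Lemma cls_winv w : cls R (winv w) = ginv (cls R w : P).
Proof.
apply: (@ginv_uniq P); rewrite /= pmul_cls; apply: cls_eq; exact: winv_cancel.
Qed.

Lemma weq_clsE u v : cls R u = cls R v -> weq R u v.
Proof.
move=> E; have : proj1_sig (cls R u) = proj1_sig (cls R v) by rewrite E.
move=> /= E'; rewrite E'; exact: weq_refl.
Qed.

Variable K : group.
Variable f : X -> K.

Definition lval (l : letter X) : K := if l.2 then ginv (f l.1) else f l.1.

Fixpoint evalw (w : word X) : K :=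
  if w is l :: w' then gmul (lval l) (evalw w') else (gone _).

Lemma evalw_cat u v : evalw (u ++ v) = gmul (evalw u) (evalw v).
Proof.
elim: u => [|l u IH] /=; first by rewrite gmul1.
by rewrite IH gmulA.
Qed.

Lemma lval_flip l : gmul (lval l) (lval (flip l)) = (gone _).
Proof.
case: l => x [] /=; rewrite /lval /=; [exact: gmulV | exact: gmulVr].
Qed.

Hypothesis Hrel : forall a b, R a b -> evalw a = evalw b.

Lemma evalw_weq u v : weq R u v -> evalw u = evalw v.
Proof.
elim=> [w|a b _ IH|a b c _ IH1 _ IH2|u0 x v0|u0 a b v0 Hr] //.
- by rewrite IH1.
- by rewrite !evalw_cat /= (gmulA (lval x)) lval_flip gmul1.
- by rewrite !evalw_cat (Hrel Hr).
Qed.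

Definition liftf (A : P) : K := evalw (Defs.repr A).

Lemma liftf_cls w : liftf (cls R w) = evalw w.
Proof. apply: evalw_weq; exact: repr_cls. Qed.

Definition plift : hom P K.
Proof.
refine (@Hom P K liftf _) => A B.
by rewrite -(Defs.reprK A) -(Defs.reprK B) /= pmul_cls !liftf_cls evalw_cat.
Defined.

Lemma plift_cls w : plift (cls R w) = evalw w.
Proof. exact: liftf_cls. Qed.

End Pres.

Section PresExt.
Variable X : Type.
Variable R : word X -> word X -> Prop.
Local Notation P := (presented_group R).
Variable K : group.

Lemma hom_evalw (h : hom P K) w :
  h (cls R w) = evalw (fun x => h (cls R [:: (x, false)])) w.
Proof.
elim: w => [|[x b] w IH] /=; first exact: hom1.
rewrite -[(x, b) :: w]/([:: (x, b)] ++ w) cls_cat hmul -IH; congr (gmul _ _).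
rewrite /lval /=; case: b => //.
have -> : ((x, true) : letter X) = flip (x, false) by [].
by rewrite cls_flip homV.
Qed.

Lemma hom_ext (h1 h2 : hom P K) :
  (forall x, h1 (cls R [:: (x, false)]) = h2 (cls R [:: (x, false)])) ->
  forall A, h1 A = h2 A.
Proof.
move=> E A; rewrite -(Defs.reprK A) !hom_evalw.
elim: (Defs.repr A) => [|[x b] w IH] //=; by rewrite IH /lval /= E.
Qed.
End PresExt.

Section MT.
Variable G : group.
Variable phi : hom G G.
Local Notation MT := (mapping_torus phi).

Definition sM (g : G) : MT := cls (mt_rel phi) [:: (Some g, false)].
Definition tM : MT := cls (mt_rel phi) [:: (None, false)].

Lemma sM_mul g h : sM (gmul g h) = gmul (sM g) (sM h).
Proof.
rewrite /sM /= pmul_cls /=; apply: cls_eq; apply: weq_sym.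
have Hr : mt_rel phi [:: (Some g, false); (Some h, false)] [:: (Some (gmul g h), false)].
  by left; exists g, h.
by have := weq_rel [::] [::] Hr; rewrite /= ?cats0.
Qed.

Definition sMh : hom G MT := @Hom G MT sM sM_mul.

Lemma tM_rel g : gmul (ginv tM) (gmul (sM g) tM) = sM (phi g).
Proof.
rewrite /tM -[(None, false)]/(flip (None, true)).
rewrite -[ginv _](@cls_flip _ (mt_rel phi)) flipK /sM /= !pmul_cls /=.
apply: cls_eq.
have Hr : mt_rel phi [:: (None, true); (Some g, false); (None, false)]
            [:: (Some (phi g), false)].
  by right; exists g.
by have := weq_rel [::] [::] Hr; rewrite /= ?cats0.
Qed.

Lemma sM1 : sM (gone G) = gone MT.
Proof. exact: (hom1 sMh). Qed.

End MT.

Section MTmap.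
Variables G H : group.
Variable phi : hom G G.
Variable psi : hom H H.
Variable e : hom G H.
Hypothesis Hc : forall g, sM psi (psi (e g)) = sM psi (e (phi g)).

Definition mtf (o : option G) : mapping_torus psi :=
  if o is Some g then sM psi (e g) else tM psi.

Lemma mtf_rel a b : mt_rel phi a b -> evalw mtf a = evalw mtf b.
Proof.
case=> [[g [h [-> ->]]]|[g [-> ->]]]; cbn [evalw lval fst snd mtf]; rewrite !gmul1r.
- by rewrite hmul sM_mul.
- by rewrite tM_rel Hc.
Qed.

Definition mt_map : hom (mapping_torus phi) (mapping_torus psi) := plift mtf_rel.

Lemma mt_map_s g : mt_map (sM phi g) = sM psi (e g).
Proof. by rewrite /mt_map /sM plift_cls; cbn [evalw lval fst snd mtf]; rewrite gmul1r. Qed.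

Lemma mt_map_t : mt_map (tM phi) = tM psi.
Proof. by rewrite /mt_map /tM plift_cls; cbn [evalw lval fst snd mtf]; rewrite gmul1r. Qed.

End MTmap.

Lemma mt_iso (G H : group) (phi : hom G G) (psi : hom H H)
  (e1 : hom G H) (e2 : hom H G)
  (Hc1 : forall g, sM psi (psi (e1 g)) = sM psi (e1 (phi g)))
  (Hc2 : forall h, sM phi (phi (e2 h)) = sM phi (e2 (psi h))) :
  (forall g, sM phi (e2 (e1 g)) = sM phi g) ->
  (forall h, sM psi (e1 (e2 h)) = sM psi h) ->
  isomorphic (mapping_torus phi) (mapping_torus psi).
Proof.
move=> E1 E2; exists (mt_map Hc1); exists (mt_map Hc2).
- move=> A; apply: (hom_ext (h1 := hcomp (mt_map Hc2) (mt_map Hc1)) (h2 := hid _)).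
  case=> [g|].
  + change (mt_map Hc2 (mt_map Hc1 (sM phi g)) = sM phi g).
    by rewrite mt_map_s mt_map_s E1.
  + change (mt_map Hc2 (mt_map Hc1 (tM phi)) = tM phi).
    by rewrite mt_map_t mt_map_t.
- move=> A; apply: (hom_ext (h1 := hcomp (mt_map Hc1) (mt_map Hc2)) (h2 := hid _)).
  case=> [g|].
  + change (mt_map Hc1 (mt_map Hc2 (sM psi g)) = sM psi g).
    by rewrite mt_map_s mt_map_s E2.
  + change (mt_map Hc1 (mt_map Hc2 (tM psi)) = tM psi).
    by rewrite mt_map_t mt_map_t.
Qed.

Lemma mt_conj (G H : group) (phi : hom G G) (psi : hom H H) (e : hom G H) :
  bijective e -> (forall g, psi (e g) = e (phi g)) ->
  isomorphic (mapping_torus phi) (mapping_torus psi).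
Proof.
case=> g gK Kg Hc.
pose ei := hinv Kg gK.
have Hc2 : forall h, phi (ei h) = ei (psi h).
  move=> h /=; apply: (can_inj gK); by rewrite -Hc !Kg.
apply: (@mt_iso _ _ phi psi e ei).
- by move=> x; rewrite Hc.
- by move=> x; rewrite Hc2.
- by move=> x /=; rewrite gK.
- by move=> x /=; rewrite Kg.
Qed.

Section Red.
Variable X : eqType.
Implicit Types (l x y : letter X) (u v w a b p : word X).

Definition push l w : word X :=
  if w is l' :: w' then (if l' == flip l then w' else l :: w) else [:: l].

Definition red w := foldr push [::] w.

Fixpoint reduced w : bool :=
  if w is x :: w' then (if w' is y :: _ then y != flip x else true) && reduced w'
  else true.

Definition jn u v : bool :=
  if u is a :: u' then (if v is b :: _ then b != flip (last a u') else true) else true.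

Lemma flip_neq l : (flip l == l) = false.
Proof. by case: l => x b; rewrite /flip /= xpair_eqE eqxx /=; case: b. Qed.

Lemma neq_flip l : l != flip l.
Proof. by rewrite eq_sym flip_neq. Qed.

Lemma flip_inj : injective (@flip X).
Proof. by move=> x y E; rewrite -(flipK x) E flipK. Qed.

Lemma reduced_cat u v : reduced (u ++ v) = [&& reduced u, reduced v & jn u v].
Proof.
elim: u => [|x u IH]; first by case: v => [|z v] //=; rewrite ?andbT.
rewrite cat_cons /= IH.
case: u {IH} => [|y u] /=; case: v => [|z v] /=; rewrite ?andbT ?cats0 //.
- by rewrite [RHS]andbC.
- by rewrite !andbA.
Qed.

Lemma reduced_push l w : reduced w -> reduced (push l w).
Proof.
case: w => [|y w] //= H.
case: ifP => E //=; first by case: w H => [|z w] //= /andP[].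
by rewrite E H.
Qed.

Lemma reduced_red w : reduced (red w).
Proof. elim: w => [|x w IH] //=; exact: reduced_push. Qed.

Lemma red_reduced w : reduced w -> red w = w.
Proof.
elim: w => [|x w IH] //= /andP[H1 H2]; rewrite IH //.
by case: w H1 {IH H2} => [|y w] //= /negbTE ->.
Qed.

Lemma redK w : red (red w) = red w.
Proof. apply: red_reduced; exact: reduced_red. Qed.

Lemma red_cat u v : red (u ++ v) = foldr push (red v) u.
Proof. by rewrite /red foldr_cat. Qed.

Lemma red_catr u v : red (u ++ v) = red (u ++ red v).
Proof. by rewrite !red_cat redK. Qed.

Lemma push_flip l w : reduced w -> push l (push (flip l) w) = w.
Proof.
case: w => [|y w] /=; first by rewrite eqxx.
rewrite flipK; case: eqP => [->|Hy] /= H.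
- by case: w H => [|z w] //= /andP[/negbTE ->].
- by rewrite eqxx.
Qed.

Lemma red_weq (R : word X -> word X -> Prop) :
  (forall a b, ~ R a b) -> forall u v, weq R u v -> red u = red v.
Proof.
move=> NR u v; elim=> // {u v}.
- by move=> u v w _ -> _ ->.
- move=> u x v; rewrite !red_cat /= push_flip //; exact: reduced_red.
- by move=> u a b v Hr; case: (NR _ _ Hr).
Qed.

Lemma weq_red (R : word X -> word X -> Prop) w : weq R w (red w).
Proof.
elim: w => [|x w IH] /=; first exact: weq_refl.
apply: weq_trans (_ : weq R (x :: red w) _).
  exact: (weq_ctx [:: x] [::] IH) || by have := weq_ctx [:: x] [::] IH; rewrite /= !cats0.
case E: (red w) => [|y w'] /=; first exact: weq_refl.
case: eqP => [->|_]; last exact: weq_refl.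
by have := weq_cancel R [::] x w'.
Qed.

Lemma winv_cat u v : winv (u ++ v) = winv v ++ winv u.
Proof. by rewrite /winv map_cat rev_cat. Qed.

Lemma winvK : involutive (@winv X).
Proof. by move=> w; rewrite /winv map_rev revK -map_comp (eq_map (@flipK X)) map_id. Qed.

Lemma size_winv w : size (winv w) = size w.
Proof. by rewrite /winv size_rev size_map. Qed.

Lemma winv_cons x w : winv (x :: w) = winv w ++ [:: flip x].
Proof. by rewrite -cat1s winv_cat. Qed.

Lemma jn_last u c z v : jn (u ++ [:: c]) (z :: v) = (z != flip c).
Proof. by case: u => [|a u] //=; rewrite last_cat. Qed.

Lemma reduced_winv w : reduced (winv w) = reduced w.
Proof.
elim: w => [|x w IH] //=.
rewrite winv_cons reduced_cat IH /= andbC; congr (_ && _).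
case: w {IH} => [|y w] //=.
by rewrite winv_cons jn_last flipK eq_sym.
Qed.

Lemma weq_canc (R : word X -> word X -> Prop) a p b :
  weq R (a ++ p ++ winv p ++ b) (a ++ b).
Proof.
elim: p a b => [|x p IH] a b /=; first exact: weq_refl.
rewrite winv_cons -catA /=.
have := IH (a ++ [:: x]) (flip x :: b); rewrite -!catA /= => H.
apply: weq_trans H _; exact: weq_cancel.
Qed.

Lemma decomp a b : reduced a -> reduced b ->
  exists a' p b', [/\ a = a' ++ p, b = winv p ++ b' & foldr push b a = a' ++ b'].
Proof.
move=> Ha Hb; elim: a Ha => [|x a IH] Ha; first by exists [::], [::], b.
have Ha' : reduced a by case: a Ha {IH} => //= ? ? /andP[].
have [a' [p [b' [Ea Eb Ef]]]] := IH Ha'.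
rewrite /= Ef.
case: a' Ea Ef => [|y a'] Ea Ef.
- rewrite /= in Ea; subst a.
  case: b' Eb Ef => [|z b'] Eb Ef.
  + by exists [:: x], p, [::].
  + rewrite /=; case: eqP => [Ez|Nz].
    * exists [::], (x :: p), b'; split => //.
      by rewrite winv_cons -catA /= -Ez.
    * by exists [:: x], p, (z :: b').
- subst a; move: Ha => /= /andP[/negbTE Hy _].
  rewrite Hy; by exists [:: x, y & a'], p, b'.
Qed.

Lemma decomp_red a b : reduced a -> reduced b ->
  exists a' p b', [/\ a = a' ++ p, b = winv p ++ b', red (a ++ b) = a' ++ b'
                   & reduced (a' ++ b')].
Proof.
move=> Ha Hb; have [a' [p [b' [E1 E2 E3]]]] := decomp Ha Hb.
have E : red (a ++ b) = a' ++ b' by rewrite red_cat (red_reduced Hb).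
exists a', p, b'; split => //; rewrite -E; exact: reduced_red.
Qed.

End Red.

Definition R0 (n : nat) := fun _ _ : word 'I_n => False.

Section Free.
Variable n : nat.
Local Notation F := (freegrp n).
Local Notation R := (@R0 n).

Definition fcls (w : word 'I_n) : F := cls R w.
Definition gen (i : 'I_n) : F := fcls [:: (i, false)].

Lemma fcls_red_eq u v : fcls u = fcls v -> red u = red v.
Proof. move=> /weq_clsE; apply: red_weq; by move=> a b. Qed.

Lemma fcls_red w : fcls (red w) = fcls w.
Proof. apply: cls_eq; apply: weq_sym; exact: weq_red. Qed.

Lemma fcls_eqP u v : reduced u -> reduced v -> fcls u = fcls v -> u = v.
Proof. by move=> Hu Hv /fcls_red_eq; rewrite !red_reduced. Qed.

Lemma fcls_cat u v : fcls (u ++ v) = gmul (fcls u) (fcls v).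
Proof. exact: cls_cat. Qed.

Lemma fcls_winv w : fcls (winv w) = ginv (fcls w).
Proof. exact: cls_winv. Qed.

Lemma freegrp_ind (A : F) : exists w, reduced w /\ A = fcls w.
Proof.
exists (red (Defs.repr A)); split; first exact: reduced_red.
by rewrite fcls_red /fcls Defs.reprK.
Qed.

Lemma inj_crit (K : group) (h : hom F K) :
  (forall w, reduced w -> w <> [::] -> h (fcls w) <> gone K) -> injective h.
Proof.
move=> H A B E.
have [w [Hw Ew]] := freegrp_ind (gmul A (ginv B)).
case: (altP (w =P [::])) => [Ew0|Nw].
- have : gmul A (ginv B) = gone F by rewrite Ew Ew0.
  move=> E1; rewrite -(gmul1r A) -(gmulV B) gmulA.
  have -> : gmul A (ginv B) = gone F by exact: E1.
  exact: gmul1.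
- exfalso; apply: (H w Hw (elimN eqP Nw)).
  by rewrite -Ew hmul homV E gmulVr.
Qed.

End Free.

Section Subst.
Variables n m : nat.
Local Notation F := (freegrp n).
Local Notation R := (@R0 n).
Variable U : 'I_n -> word 'I_m.

Definition img (l : letter 'I_n) : word 'I_m := if l.2 then winv (U l.1) else U l.1.

Lemma subst_rel a b : R a b -> evalw (fun i => @fcls m (U i)) a =
                                 evalw (fun i => @fcls m (U i)) b.
Proof. by []. Qed.

Definition subst : hom F (freegrp m) := plift subst_rel.

Definition prodw (w : word 'I_n) : word 'I_m := flatten (map img w).

Lemma subst_cls w : subst (fcls w) = fcls (prodw w).
Proof.
rewrite /subst plift_cls.
elim: w => [|[i b] w IH]; first by [].
cbn [evalw]; rewrite IH.
change (gmul (lval (fun i0 => @fcls m (U i0)) (i, b)) (@fcls m (prodw w)) =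
        @fcls m (img (i, b) ++ prodw w)).
rewrite fcls_cat; congr (gmul _ _); rewrite /lval /img /=.
by case: b => //; rewrite fcls_winv.
Qed.

Lemma subst_gen i : subst (gen i) = fcls (U i).
Proof. by rewrite /gen subst_cls /prodw /= cats0. Qed.

End Subst.

Definition canc (X : eqType) (a b : word X) : nat :=
  (size a + size b - size (red (a ++ b)))./2.

Lemma canc_decomp (X : eqType) (a b a' p b' : word X) :
  a = a' ++ p -> b = winv p ++ b' -> red (a ++ b) = a' ++ b' -> canc a b = size p.
Proof.
move=> -> -> E; rewrite /canc E !size_cat size_winv.
have -> : size a' + size p + (size p + size b') - (size a' + size b') = (size p).*2.
  by rewrite -addnn; lia.
exact: doubleK.
Qed.

Section Inj.
Variables n m : nat.
Variable U : 'I_n -> word 'I_m.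
Hypothesis Ured : forall i, reduced (U i).
Hypothesis Une : forall i, U i <> [::].
Local Notation img := (img U).
Hypothesis HC : forall l1 l l2 : letter 'I_n, l1 != flip l -> l2 != flip l ->
  canc (img l1) (img l) + canc (img l) (img l2) < size (img l).

Lemma img_red l : reduced (img l).
Proof. rewrite /img; case: ifP => _; rewrite ?reduced_winv; exact: Ured. Qed.

Lemma img_ne l : img l <> [::].
Proof.
rewrite /img; case: l => i [] /=; last exact: Une.
by move=> E; case: (@Une i); rewrite -(winvK (U i)) E.
Qed.

Definition cn l (w : word 'I_n) := if w is l2 :: _ then canc (img l) (img l2) else 0.

Lemma flip_sym (X : eqType) (x y : letter X) : (x != flip y) = (y != flip x).
Proof.
apply/idP/idP; apply: contra => /eqP ->; by rewrite flipK.
Qed.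

Lemma cn_bound l l2 w : reduced (l2 :: w) -> l != flip l2 ->
  canc (img l) (img l2) + cn l2 w < size (img l2).
Proof.
move=> Hr Hl; case: w Hr => [|l3 w] /= Hr.
- have := HC (l1 := l) (l := l2) (l2 := l2); move=> /(_ Hl (neq_flip l2)); lia.
- case/andP: Hr => H3 _; exact: HC.
Qed.

Lemma cn_pos l w : reduced (l :: w) -> cn l w < size (img l).
Proof.
case: w => [|l2 w] /= Hr.
- by case: (img l) (@img_ne l).
- have := HC (l1 := l) (l := l) (l2 := l2).
  case/andP: Hr => H1 _; move=> /(_ (neq_flip l) H1); lia.
Qed.

Lemma red_prodw l w : reduced (l :: w) ->
  exists z, red (prodw U (l :: w)) = take (size (img l) - cn l w) (img l) ++ z.
Proof.
elim: w l => [|l2 w IH] l Hr.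
- exists [::]; rewrite /prodw /= cats0 red_reduced ?img_red // subn0 take_size cats0 //.
- have Hr2 : reduced (l2 :: w) by case/andP: Hr.
  have Hl : l2 != flip l by case/andP: Hr.
  have [z2 Ez2] := IH l2 Hr2.
  have [a' [p [b' [Ea Eb Ered Hab]]]] := decomp_red (@img_red l) (@img_red l2).
  have Hc := canc_decomp Ea Eb Ered.
  have Hb := cn_bound Hr2 (l := l); rewrite flip_sym in Hb; have {Hb}Hb := Hb Hl.
  set k2 := size (img l2) - cn l2 w in Ez2.
  have Hk2 : size p < k2 by rewrite /k2; lia.
  have Hsz2 : size (img l2) = size p + size b' by rewrite Eb size_cat size_winv.
  move: Ez2; rewrite Eb take_cat size_winv ltnNge (ltnW Hk2) /= => Ez2.
  have Hk2le : k2 <= size (img l2) by exact: leq_subr.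
  have [k' Ek] : exists k', k2 - size p = k'.+1 by exists (k2 - size p).-1; lia.
  rewrite Ek in Ez2.
  case: b' Eb Ered Hab Hsz2 Ez2 => [|bb b''] Eb Ered Hab Hsz2 Ez2.
    by rewrite /= addn0 in Hsz2; have := leq_trans Hk2 Hk2le; rewrite Hsz2 ltnn.
  have Hy : reduced (winv p ++ bb :: take k' b'' ++ z2).
    by move: (reduced_red (prodw U (l2 :: w))); rewrite Ez2 /= -catA.
  exists (bb :: take k' b'' ++ z2).
  have E1 : red (prodw U [:: l, l2 & w]) = red (img l ++ red (prodw U (l2 :: w))).
    by rewrite -red_catr.
  rewrite E1 Ez2 Ea /= -!catA /=.
  rewrite (red_weq (R := @R0 m) (fun _ _ F => F) (weq_canc (@R0 m) a' p _)).
  rewrite red_reduced; last first.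
    move: Hy Hab; rewrite !reduced_cat => /and3P[_ Hy _] /and3P[Ha' Hb'' Hj].
    rewrite Ha' Hy /=.
    by case: (a') Hj.
  by rewrite -Ea Hc Ea size_cat addnK take_size_cat.
Qed.

Lemma subst_inj : injective (subst U).
Proof.
apply: inj_crit => -[|l w] // Hr _.
rewrite subst_cls.
have [z Ez] := red_prodw Hr.
move=> E; have := fcls_red_eq (E : fcls _ = fcls [::]); rewrite Ez /=.
have := cn_pos Hr.
case: (img l) (@img_ne l) => [|x s] // _ Hs.
by rewrite /= subSn.
Qed.

End Inj.

Section Red2.
Variable X : eqType.
Implicit Types (l x y : letter X) (u v w a b p s z : word X).

Lemma reduced_catl u v : reduced (u ++ v) -> reduced u.
Proof. by rewrite reduced_cat => /and3P[]. Qed.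

Lemma reduced_catr u v : reduced (u ++ v) -> reduced v.
Proof. by rewrite reduced_cat => /and3P[]. Qed.

Lemma winv_rcons s c : winv (rcons s c) = flip c :: winv s.
Proof. by rewrite -cats1 winv_cat. Qed.

Lemma Lxx s : reduced (s ++ winv s) -> s = [::].
Proof.
case/lastP: s => [|y c] //.
rewrite winv_rcons -cats1 reduced_cat jn_last.
by rewrite eqxx !andbF.
Qed.

Lemma Lpal z : reduced z -> z = winv z -> z = [::].
Proof.
move: {2}(size z) (leqnn (size z)) => N; elim: N z => [|N IH] z.
  by case: z.
case: z => [|c z'] //; case/lastP: z' => [|m d] Hs Hr.
- rewrite /winv /= => [[]] /eqP; by rewrite eq_sym flip_neq.
- rewrite -rcons_cons winv_rcons winv_cons => [[Ec]].
  rewrite -cats1 => /eqP; rewrite eqseq_cat ?size_winv //.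
  case/andP=> /eqP Em /eqP [Ed].
  have Hm : reduced m.
    by move: Hr; rewrite -rcons_cons -cats1 => /reduced_catl /= /andP[].
  have Hsm : size m <= N by move: Hs; rewrite /= size_rcons; lia.
  have Em0 := IH m Hsm Hm Em; subst m.
  by move: Hr; rewrite /= Ed eqxx.
Qed.

Lemma cself s : reduced s -> s <> [::] -> (canc s s).*2 < size s.
Proof.
move=> Hs Hne.
have [a' [p [b' [Ea Eb Ered Hab]]]] := decomp_red Hs Hs.
rewrite (canc_decomp Ea Eb Ered).
rewrite ltnNge; apply/negP => Hle.
have Hsz : size s = size a' + size p by rewrite Ea size_cat.
have Ha'p : size a' <= size p by rewrite -addnn in Hle; lia.
set k := size p - size a'.
have Ep : p = take k p ++ drop k p by rewrite cat_take_drop.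
have E1 : winv p = a' ++ take k p.
  have : take (size p) s = winv p by rewrite Eb -(size_winv p) take_size_cat.
  rewrite {1}Ea take_cat ltnNge Ha'p /=.
  have -> : size p - size a' = k by [].
  by move=> <-.
have E2 : winv p = winv (drop k p) ++ winv (take k p) by rewrite {1}Ep winv_cat.
have Hsd : size (winv (drop k p)) = size a' by rewrite size_winv size_drop /k; lia.
move: E1; rewrite E2 => /eqP; rewrite eqseq_cat // => /andP[/eqP Ed /eqP Et].
have Hp : reduced p by move: Hs; rewrite Ea => /reduced_catr.
have Ht : reduced (take k p).
  by move: Hp; rewrite {1}Ep => /reduced_catl.
have Et0 := Lpal Ht (esym Et).
have Ep' : drop k p = p by rewrite {2}Ep Et0.
rewrite Ep' in Ed.
have Hx : reduced (winv p ++ winv (winv p)) by rewrite winvK Ed -Ea.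
have Hw := Lxx Hx.
have Hp0 : p = [::] by rewrite -(winvK p) Hw.
by apply: Hne; rewrite Ea -Ed Hp0.
Qed.

Lemma canc_winv a b : reduced a -> reduced b -> canc (winv b) (winv a) = canc a b.
Proof.
move=> Ha Hb.
have [a' [p [b' [Ea Eb Ered Hab]]]] := decomp_red Ha Hb.
rewrite (canc_decomp Ea Eb Ered).
have Ea2 : winv a = winv p ++ winv a' by rewrite Ea winv_cat.
have Eb2 : winv b = winv b' ++ p by rewrite Eb winv_cat winvK.
apply: (canc_decomp Eb2 Ea2).
rewrite Eb2 Ea2 -catA.
rewrite (red_weq (R := fun _ _ : word X => False) (fun _ _ F => F) (weq_canc _ _ _ _)).
by rewrite red_reduced // -winv_cat reduced_winv.
Qed.

Lemma size_red_cat a b : reduced a -> reduced b ->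
  size (red (a ++ b)) = size a + size b - (canc a b).*2.
Proof.
move=> Ha Hb.
have [a' [p [b' [Ea Eb Ered Hab]]]] := decomp_red Ha Hb.
rewrite (canc_decomp Ea Eb Ered) Ered Ea Eb !size_cat size_winv -addnn; lia.
Qed.

Lemma canc_le a b : reduced a -> reduced b -> canc a b <= size a.
Proof.
move=> Ha Hb.
have [a' [p [b' [Ea Eb Ered Hab]]]] := decomp_red Ha Hb.
by rewrite (canc_decomp Ea Eb Ered) Ea size_cat leq_addl.
Qed.

End Red2.

Section Code.
Variable n : nat.

Definition digit (l : letter 'I_n) : nat := l.2 + (nat_of_ord l.1).*2.
Definition BB := n.*2.

Fixpoint code (w : word 'I_n) : nat :=
  if w is l :: w' then digit l * BB ^ size w' + code w' else 0.

Lemma digit_lt l : digit l < BB.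
Proof. case: l => i b; rewrite /digit /BB /=; have := ltn_ord i; case: b => /=; lia. Qed.

Lemma code_lt w : code w < BB ^ size w.
Proof.
elim: w => [|l w IH] //=.
have := digit_lt l; rewrite expnS => Hd.
have : digit l * BB ^ size w + code w < (digit l).+1 * BB ^ size w.
  by rewrite mulSn addnC ltn_add2r.
move=> H; apply: (leq_trans H); rewrite leq_mul2r Hd orbT //.
Qed.

Lemma code_cat x y : code (x ++ y) = code x * BB ^ size y + code y.
Proof.
elim: x => [|l x IH] //=.
by rewrite IH size_cat expnD mulnDl mulnA addnA.
Qed.

Lemma digit_inj : injective digit.
Proof.
move=> [i b] [j c]; rewrite /digit /= => E.
have Eb : b = c.
  by have := congr1 odd E; rewrite !oddD !odd_double !addbF !oddb.
subst c; have := congr1 half E; rewrite !half_bit_double => /val_inj ->.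
by [].
Qed.

Lemma code_inj x y : size x = size y -> code x = code y -> x = y.
Proof.
elim: x y => [|l x IH] [|l' y] //= [Es] E.
have Hx := code_lt x; have Hy := code_lt y; rewrite -Es in Hy.
have Hp : 0 < BB ^ size x by case: (BB ^ size x) Hx.
have Ed : digit l = digit l'.
  have := congr1 (fun t => t %/ BB ^ size x) E.
  by rewrite /= -Es !divnMDl // !divn_small // !addn0.
rewrite Ed -Es in E; have Ec : code x = code y by apply/eqP; rewrite -(eqn_add2l (digit l' * BB ^ size x)) E.
by rewrite (digit_inj Ed) (IH y Es Ec).
Qed.

Definition lh (w : word 'I_n) := take (uphalf (size w)) w.
Definition qv (w : word 'I_n) := code (lh w) + code (lh (winv w)).

Lemma qv_winv w : qv (winv w) = qv w.
Proof. by rewrite /qv winvK addnC. Qed.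

Lemma qv_lt P Q b : size P = size Q -> size P <= size b -> code P < code Q ->
  qv (P ++ b) < qv (Q ++ b).
Proof.
move=> EPQ Hb Hc.
have Hh1 : size P <= uphalf (size P + size b).
  rewrite geq_uphalf_double -addnn; lia.
have Hh2 : uphalf (size P + size b) <= size b.
  rewrite leq_uphalf_double -addnn; lia.
set h := uphalf (size P + size b) in Hh1 Hh2.
have E1 : forall R, size R = size P -> lh (R ++ b) = R ++ take (h - size P) b.
  move=> R ER; rewrite /lh size_cat ER -/h take_cat ER ltnNge Hh1 //.
have E2 : forall R, size R = size P -> lh (winv (R ++ b)) = take h (winv b).
  move=> R ER; rewrite /lh winv_cat size_cat !size_winv ER addnC -/h.
  by rewrite takel_cat // size_winv.
rewrite /qv E1 // E1 // E2 // E2 // ltn_add2r !code_cat ltn_add2r ltn_pmul2r //.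
rewrite expn_gt0 /BB.
case: Q EPQ Hc => [|[i e] Q] EPQ Hc; first by rewrite /= ltn0 in Hc.
apply/orP; left; have := ltn_ord i; lia.
Qed.

End Code.

Lemma same_gen (X : eqType) (x y : letter X) : x.1 = y.1 -> x != flip y -> x = y.
Proof.
case: x => i b; case: y => j c /= <-; rewrite /flip /=.
by case: b; case: c; rewrite ?eqxx.
Qed.

Section Niel.
Variable n : nat.
Implicit Types U : 'I_n -> word 'I_n.

Definition HCond U := forall l1 l l2 : letter 'I_n, l1 != flip l -> l2 != flip l ->
  canc (img U l1) (img U l) + canc (img U l) (img U l2) < size (img U l).

Lemma img_flip U l : img U (flip l) = winv (img U l).
Proof. by case: l => i [] //=; rewrite /img /= winvK. Qed.

Lemma img_size U l : size (img U l) = size (U l.1).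
Proof. by case: l => i [] //=; rewrite /img /= size_winv. Qed.

Lemma img_qv U l : qv (img U l) = qv (U l.1).
Proof. by case: l => i [] //=; rewrite /img /= qv_winv. Qed.

Section Step.
Variable U : 'I_n -> word 'I_n.
Hypothesis Ured : forall i, reduced (U i).
Hypothesis Une : forall i, U i <> [::].
Local Notation s := (img U).

Definition goodmove (x y : letter 'I_n) :=
  x.1 != y.1 /\
  (size (red (s x ++ s y)) < size (U x.1) \/
   (size (red (s x ++ s y)) = size (U x.1) /\ qv (red (s x ++ s y)) < qv (U x.1))).

Lemma sred l : reduced (s l).
Proof. exact: img_red. Qed.

Lemma sne l : s l <> [::].
Proof. exact: img_ne. Qed.

Lemma strict1 x y : x != flip y -> size (s y) < (canc (s x) (s y)).*2 -> goodmove x y.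
Proof.
move=> Hxy Hc; split.
- apply/negP => /eqP E; have Exy := same_gen E Hxy; subst y.
  move: (cself (sred x) (@sne x)) => H'; have := ltn_trans H' Hc; by rewrite ltnn.
- left; rewrite size_red_cat ?sred // -img_size.
  have := canc_le (sred x) (sred y).
  set c := canc _ _; set a := size (s x); set b := size (s y) in Hc *; lia.
Qed.

Lemma strict2 x y : x != flip y -> size (s x) < (canc (s x) (s y)).*2 ->
  goodmove (flip y) (flip x).
Proof.
move=> Hxy Hc; apply: strict1.
- by rewrite flipK eq_sym.
- by rewrite !img_flip canc_winv ?sred // size_winv.
Qed.

Lemma step : ~ HCond U -> exists x y, goodmove x y.
Proof.
move=> NH.
case: (classic (exists x y, x != flip y /\
   (size (s y) < (canc (s x) (s y)).*2 \/ size (s x) < (canc (s x) (s y)).*2)))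
  => [[x [y [Hxy [H1|H2]]]]|NS].
- by exists x, y; exact: strict1.
- by exists (flip y), (flip x); exact: strict2.
have H : forall x y, x != flip y ->
    (canc (s x) (s y)).*2 <= size (s y) /\ (canc (s x) (s y)).*2 <= size (s x).
  move=> x y Hxy; split; rewrite leqNgt; apply/negP => Hc; apply: NS; exists x, y; by auto.
have [l1 [l [l2 [H1 H2 H3]]]] : exists l1 l l2, [/\ l1 != flip l, l2 != flip l &
    size (s l) <= canc (s l1) (s l) + canc (s l) (s l2)].
  apply: NNPP => NE; apply: NH => l1 l l2 H1 H2; rewrite ltnNge; apply/negP => H3.
  by apply: NE; exists l1, l, l2.
have [H1a H1b] := H _ _ H1.
have H2' : l != flip l2 by rewrite flip_sym.
have [H2a H2b] := H _ _ H2'.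
have [a1 [p1 [b1 [Ea1 Eb1 Ered1 Hab1]]]] := decomp_red (sred l1) (sred l).
have [a2 [p2 [b2 [Ea2 Eb2 Ered2 Hab2]]]] := decomp_red (sred l) (sred l2).
have Hc1 := canc_decomp Ea1 Eb1 Ered1.
have Hc2 := canc_decomp Ea2 Eb2 Ered2.
rewrite Hc1 Hc2 in H1a H1b H2a H2b H3.
have Hsl : size (s l) = size a2 + size p2 by rewrite Ea2 size_cat.
have Hsl' : size (s l) = size p1 + size b1 by rewrite Eb1 size_cat size_winv.
have Hsl1 : size (s l1) = size a1 + size p1 by rewrite Ea1 size_cat.
have Hsl2 : size (s l2) = size p2 + size b2 by rewrite Eb2 size_cat size_winv.
have Hk : size p1 = size p2 by rewrite -!addnn in H1a H2b; lia.
have Hsa2 : size (winv p1) = size a2 by rewrite size_winv; lia.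
have := Eb1; rewrite Ea2 => /eqP; rewrite eq_sym eqseq_cat // => /andP[/eqP EP /eqP EQ].
(* P := a2 = winv p1,  Q := p2 = b1 *)
subst b1.
have Ha2k : size a2 = size p2 by rewrite -EP size_winv Hk.
have Hne1 : l1.1 != l.1.
  apply/negP => /eqP E; have E' := same_gen E H1; subst l1.
  move: (cself (sred l) (@sne l)); rewrite Hc1 -addnn => HH.
  set A := size (s l) in HH H3; lia.
have Hne2 : l2.1 != l.1.
  apply/negP => /eqP E; have E' := same_gen E H2; subst l2.
  move: (cself (sred l) (@sne l)); rewrite Hc2 -addnn => HH.
  set A := size (s l) in HH H3; lia.
have Hp2 : 0 < size p2.
  rewrite lt0n; apply/negP => /eqP H0; apply: (@sne l); apply/eqP.
  by rewrite -size_eq0 Hsl' Hk H0.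
have HPQ : code a2 != code (winv p2).
  apply/negP => /eqP Ec.
  have Hsz : size a2 = size (winv p2) by rewrite -EP !size_winv.
  have EPQ := code_inj Hsz Ec.
  have Hr : reduced (winv p2 ++ winv (winv p2)) by rewrite winvK -EPQ -Ea2; exact: sred.
  by move: (Lxx Hr) Hp2 => /(congr1 size); rewrite size_winv => ->.
case: (ltngtP (code a2) (code (winv p2))) HPQ => // Hlt _.
- exists (flip l2), (flip l); split; first by [].
  rewrite !img_flip Eb2 Ea2 !winv_cat winvK -!catA.
  rewrite (red_weq (R := @R0 n) (fun _ _ F => F) (weq_canc _ _ _ _)).
  have Hr : reduced (winv b2 ++ winv a2) by rewrite -winv_cat reduced_winv -Ered2; exact: reduced_red.
  rewrite red_reduced //= -(@img_size U l2) Eb2.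
  right; split; first by rewrite !size_cat !size_winv Ha2k addnC.
  rewrite -(@img_qv U l2) Eb2 -winv_cat qv_winv.
  apply: qv_lt => //; first by rewrite size_winv Ha2k.
  by rewrite Ha2k; move: H2a; rewrite Hsl2 -addnn leq_add2l.
- exists l1, l; split; first by [].
  rewrite Ered1 -(@img_size U l1) Ea1 -(@img_qv U l1) Ea1.
  right; split; first by rewrite !size_cat Hk.
  rewrite -(qv_winv (a1 ++ p2)) -(qv_winv (a1 ++ p1)) !winv_cat EP.
  apply: qv_lt => //; first by rewrite size_winv Ha2k.
  by rewrite !size_winv -Hk; move: H1b; rewrite Hsl1 -addnn leq_add2r.
Qed.

End Step.
End Niel.

Section NL.
Variable n : nat.
Local Notation F := (freegrp n).
Implicit Types U : 'I_n -> word 'I_n.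

Definition upd U i (w : word 'I_n) := fun k => if k == i then w else U k.
Definition Lsum U := \sum_(k < n) size (U k).
Definition Qsum U := \sum_(k < n) qv (U k).

Lemma sum_upd (f : word 'I_n -> nat) U i w :
  \sum_(k < n) f (upd U i w k) + f (U i) = \sum_(k < n) f (U k) + f w.
Proof.
rewrite (bigD1 i) //= [in RHS](bigD1 i) //= /upd eqxx.
rewrite (eq_bigr (fun k => f (U k))); last by move=> k /negbTE ->.
lia.
Qed.

Definition ltm U' U := Lsum U' < Lsum U \/ (Lsum U' = Lsum U /\ Qsum U' < Qsum U).

Lemma ltm_ind (P : ('I_n -> word 'I_n) -> Prop) :
  (forall U, (forall U', ltm U' U -> P U') -> P U) -> forall U, P U.
Proof.
move=> H.
suff: forall a U, Lsum U < a -> P U by move=> HH U; exact: (HH (Lsum U).+1).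
elim=> [|a IHa] U //.
move=> HU; move: {2}(Qsum U).+1 (ltnSn (Qsum U)) => b.
elim: b U HU => [|b IHb] U HU HQ //.
apply: H => U' [HL|[HL HQ']].
- apply: IHa; lia.
- apply: IHb; lia.
Qed.

Lemma img_single (V : 'I_n -> word 'I_n) l : V l.1 = [:: (l.1, false)] -> img V l = [:: l].
Proof. by case: l => j [] /= E; rewrite /img /= E. Qed.

Lemma gen_hom_eq (h1 h2 : hom F F) : (forall k, h1 (gen k) = h2 (gen k)) -> forall A, h1 A = h2 A.
Proof. move=> E; apply: hom_ext => k; exact: E. Qed.

Definition Vm (i : 'I_n) (e : bool) (y : letter 'I_n) := fun k =>
  if k == i then (if e then [:: flip y; (i, false)] else [:: (i, false); y])
  else [:: (k, false)].
Definition Wm (i : 'I_n) (e : bool) (y : letter 'I_n) := fun k =>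
  if k == i then (if e then [:: y; (i, false)] else [:: (i, false); flip y])
  else [:: (k, false)].
Definition betam i e y : hom F F := subst (Vm i e y).
Definition gammam i e y : hom F F := subst (Wm i e y).
Definition wm U i e y := red (img U (i, e) ++ img U y).
Definition Um U i e y := upd U i (if e then winv (wm U i e y) else wm U i e y).

Section Move.
Variable U : 'I_n -> word 'I_n.
Variables (i : 'I_n) (y : letter 'I_n).
Hypothesis Hy : y.1 != i.

Lemma Vm_other e l : l.1 != i -> img (Vm i e y) l = [:: l].
Proof. move=> H; apply: img_single; by rewrite /Vm (negbTE H). Qed.

Lemma Wm_other e l : l.1 != i -> img (Wm i e y) l = [:: l].
Proof. move=> H; apply: img_single; by rewrite /Wm (negbTE H). Qed.

Lemma betaK e A : betam i e y (gammam i e y A) = A.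
Proof.
apply: (gen_hom_eq (h1 := hcomp (betam i e y) (gammam i e y)) (h2 := hid F)) => k.
change (betam i e y (gammam i e y (gen k)) = gen k).
rewrite /gammam /betam subst_gen subst_cls.
case Ek: (k == i).
- move/eqP: Ek => ->.
  have Ey : img (Vm i e y) y = [:: y] by exact: Vm_other.
  have Efy : img (Vm i e y) (flip y) = [:: flip y] by exact: Vm_other.
  rewrite /Wm eqxx /prodw.
  case: e Ey Efy => Ey Efy /=; rewrite ?Ey ?Efy /= /img /= /Vm eqxx /=.
  + apply: cls_eq; exact: (weq_cancel _ [::] y [:: (i, false)]).
  + apply: cls_eq; exact: (weq_cancel _ [:: (i, false)] y [::]).
- by rewrite /Wm Ek /prodw /= /img /= /Vm Ek.
Qed.

Lemma gammaK e A : gammam i e y (betam i e y A) = A.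
Proof.
apply: (gen_hom_eq (h1 := hcomp (gammam i e y) (betam i e y)) (h2 := hid F)) => k.
change (gammam i e y (betam i e y (gen k)) = gen k).
rewrite /gammam /betam subst_gen subst_cls.
case Ek: (k == i).
- move/eqP: Ek => ->.
  have Ey : img (Wm i e y) y = [:: y] by exact: Wm_other.
  have Efy : img (Wm i e y) (flip y) = [:: flip y] by exact: Wm_other.
  rewrite /Vm eqxx /prodw.
  case: e Ey Efy => Ey Efy /=; rewrite ?Ey ?Efy /= /img /= /Wm eqxx /=.
  + apply: cls_eq; have := weq_cancel (@R0 n) [::] (flip y) [:: (i, false)]; by rewrite flipK.
  + apply: cls_eq; have := weq_cancel (@R0 n) [:: (i, false)] (flip y) [::]; by rewrite flipK.
- by rewrite /Vm Ek /prodw /= /img /= /Wm Ek.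
Qed.

Lemma subst_Um e A : subst (Um U i e y) A = subst U (betam i e y A).
Proof.
apply: (gen_hom_eq (h1 := subst (Um U i e y)) (h2 := hcomp (subst U) (betam i e y))) => k.
change (subst (Um U i e y) (gen k) = subst U (betam i e y (gen k))).
rewrite /betam subst_gen subst_gen subst_cls /Um /upd /Vm.
case Ek: (k == i).
- rewrite /wm; case: e; rewrite /prodw /= cats0.
  + rewrite fcls_winv fcls_red -fcls_winv winv_cat img_flip /img /= winvK //.
  + by rewrite fcls_red.
- by rewrite /prodw /= cats0 /img.
Qed.

End Move.

Definition nl_concl U :=
  (exists alpha : hom F F, bijective alpha /\ exists k, subst U (alpha (gen k)) = gone F)
  \/ injective (subst U).

Lemma NL U : (forall k, reduced (U k)) -> nl_concl U.
Proof.
move: U; apply: ltm_ind => U IH Ured.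
case: (classic (exists k, U k = [::])) => [[k Ek]|Nk].
  left; exists (hid F); split; first by exists id.
  exists k; change (subst U (gen k) = gone F); by rewrite subst_gen Ek.
have Une : forall k, U k <> [::] by move=> k Ek; apply: Nk; exists k.
case: (classic (HCond U)) => [HC|NH].
  right; exact: subst_inj Ured Une HC.
have [[i e] [y [Hy Hmv]]] := step Ured Une NH.
rewrite /= eq_sym in Hy.
have Hlt : ltm (Um U i e y) U.
  have E1 := sum_upd size U i (if e then winv (wm U i e y) else wm U i e y).
  have E2 := sum_upd (@qv n) U i (if e then winv (wm U i e y) else wm U i e y).
  rewrite /ltm /Lsum /Qsum.
  have Hs : size (if e then winv (wm U i e y) else wm U i e y) = size (wm U i e y).
    by case: e {Hmv E1 E2}; rewrite ?size_winv.
  have Hq : qv (if e then winv (wm U i e y) else wm U i e y) = qv (wm U i e y).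
    by case: e {Hmv E1 E2 Hs}; rewrite ?qv_winv.
  rewrite Hs in E1; rewrite Hq in E2.
  rewrite /Um; rewrite /= -/(wm U i e y) in Hmv.
  move: Hmv E1 E2; set a := size (wm U i e y); set b := qv (wm U i e y).
  set S1 := \sum_(k < n) size (upd _ _ _ k); set S2 := \sum_(k < n) qv (upd _ _ _ k).
  move=> Hmv E1 E2; lia.
have Hred' : forall k, reduced (Um U i e y k).
  move=> k; rewrite /Um /upd; case: (k == i); last exact: Ured.
  by case: (e); rewrite ?reduced_winv /wm reduced_red.
case: (IH _ Hlt Hred') => [[alpha [Hb [k Hk]]]|Hinj].
- left; exists (hcomp (betam i e y) alpha); split.
  + apply: bij_comp => //; exists (gammam i e y) => A.
    * exact: (@gammaK i y Hy e).
    * exact: (@betaK i y Hy e).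
  + exists k; rewrite -[hfun (hcomp _ _) _]/(betam i e y (alpha (gen k))).
    by rewrite -(@subst_Um U i y e).
- right => A B E.
  rewrite -(@betaK i y Hy e A) -(@betaK i y Hy e B); congr (betam i e y _).
  by apply: Hinj; rewrite !(@subst_Um U i y e) !(@betaK i y Hy e).
Qed.

End NL.

Lemma gmulr_cancel (G : group) (x y z : G) : gmul x z = gmul y z -> x = y.
Proof.
move=> E; rewrite -(gmul1r x) -(gmul1r y) -(gmulVr z) !gmulA E //.
Qed.

Section Rank.
Variable n : nat.
Local Notation F1 := (freegrp n.+1).
Local Notation F0 := (freegrp n).
Variable k : 'I_n.+1.

Definition Pk (j : 'I_n.+1) : word 'I_n :=
  if unlift k j is Some j' then [:: (j', false)] else [::].
Definition Ik (j : 'I_n) : word 'I_n.+1 := [:: (lift k j, false)].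
Definition piK : hom F1 F0 := subst Pk.
Definition iotaK : hom F0 F1 := subst Ik.

Lemma piK_iotaK h : piK (iotaK h) = h.
Proof.
apply: (gen_hom_eq (h1 := hcomp piK iotaK) (h2 := hid F0)) => j.
change (piK (iotaK (gen j)) = gen j).
by rewrite /piK /iotaK subst_gen /Ik subst_cls /prodw /= /img /= /Pk liftK cats0.
Qed.

Variable psi : hom F1 F1.
Hypothesis Hk : psi (gen k) = gone F1.

Lemma psi_iota_pi g : psi (iotaK (piK g)) = psi g.
Proof.
apply: (gen_hom_eq (h1 := hcomp psi (hcomp iotaK piK)) (h2 := psi)) => j.
change (psi (iotaK (piK (gen j))) = psi (gen j)).
rewrite /piK subst_gen /Pk.
case: unliftP => [j'|] ->.
- by rewrite /iotaK -/(gen j') subst_gen.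
- rewrite Hk; change (psi (iotaK (gone F0)) = gone F1); by rewrite !hom1.
Qed.

Definition psi2 : hom F0 F0 := hcomp piK (hcomp psi iotaK).

Lemma sM_genk : sM psi (gen k) = gone _.
Proof.
have H := tM_rel psi (gen k); rewrite Hk sM1 in H.
set t := tM psi in H; set x := sM psi (gen k) in H *.
have H2 : gmul x t = gmul (gone _) t.
  by rewrite gmul1 -(gmulVK t (gmul x t)) H gmul1r.
exact: gmulr_cancel H2.
Qed.

Lemma sM_iota_pi g : sM psi (iotaK (piK g)) = sM psi g.
Proof.
apply: (hom_ext (h1 := hcomp (sMh psi) (hcomp iotaK piK)) (h2 := sMh psi)) => j.
change (sM psi (iotaK (piK (gen j))) = sM psi (gen j)).
rewrite /piK subst_gen /Pk.
case: unliftP => [j'|] ->.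
- by rewrite /iotaK -/(gen j') subst_gen.
- rewrite sM_genk; change (sM psi (iotaK (gone F0)) = gone _); by rewrite hom1 sM1.
Qed.

Lemma rank_iso : isomorphic (mapping_torus psi) (mapping_torus psi2).
Proof.
apply: (@mt_iso _ _ psi psi2 piK iotaK).
- move=> g; congr (sM psi2 _).
  change (piK (psi (iotaK (piK g))) = piK (psi g)); by rewrite psi_iota_pi.
- move=> h.
  change (sM psi (psi (iotaK h)) = sM psi (iotaK (piK (psi (iotaK h))))).
  by rewrite sM_iota_pi.
- exact: sM_iota_pi.
- by move=> h; rewrite piK_iotaK.
Qed.

End Rank.

Lemma main_free n (phi : hom (freegrp n) (freegrp n)) :
  exists m (psi : hom (freegrp m) (freegrp m)),
    injective psi /\ isomorphic (mapping_torus phi) (mapping_torus psi).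
Proof.
elim: n phi => [|n IH] phi.
- pose U := fun i : 'I_0 => red (Defs.repr (phi (gen i))).
  have Hred : forall k, reduced (U k) by move=> k; exact: reduced_red.
  have Eq : forall A, subst U A = phi A.
    apply: gen_hom_eq => i; by rewrite subst_gen /U fcls_red /fcls Defs.reprK.
  case: (NL Hred) => [[alpha [_ [[] //]]]|Hinj].
  exists 0, phi; split; last exact: isomorphic_refl.
  by move=> A B E; apply: Hinj; rewrite !Eq.
- pose U := fun i : 'I_n.+1 => red (Defs.repr (phi (gen i))).
  have Hred : forall k, reduced (U k) by move=> k; exact: reduced_red.
  have Eq : forall A, subst U A = phi A.
    apply: gen_hom_eq => i; by rewrite subst_gen /U fcls_red /fcls Defs.reprK.
  case: (NL Hred) => [[alpha [[ai aK Ka] [k Hk]]]|Hinj]; last first.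
    exists n.+1, phi; split; last exact: isomorphic_refl.
    by move=> A B E; apply: Hinj; rewrite !Eq.
  rewrite Eq in Hk.
  pose aih := hinv Ka aK.
  pose psi1 := hcomp aih (hcomp phi alpha).
  have Hk1 : psi1 (gen k) = gone _.
    change (ai (phi (alpha (gen k))) = gone _); rewrite Hk.
    exact: (hom1 aih).
  have I1 : isomorphic (mapping_torus phi) (mapping_torus psi1).
    apply: (@mt_conj _ _ phi psi1 aih).
    + by exists alpha.
    + by move=> g; change (ai (phi (alpha (ai g))) = ai (phi g)); rewrite Ka.
  have I2 := rank_iso Hk1.
  have [m [psi [Hinj I3]]] := IH (psi2 k psi1).
  exists m, psi; split => //.
  exact: isomorphic_trans I1 (isomorphic_trans I2 I3).
Qed.

Theorem proposition0p1 (F : group) (phi : hom F F) :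
  fg_free F ->
  exists (F1 : group) (psi : hom F1 F1),
    fg_free F1 /\ injective (hfun psi) /\
    isomorphic (mapping_torus phi) (mapping_torus psi).
Proof.
case=> n [e [ei eK Ke]].
pose eih := hinv Ke eK.
pose phi0 := hcomp e (hcomp phi eih).
have I1 : isomorphic (mapping_torus phi) (mapping_torus phi0).
  apply: (@mt_conj _ _ phi phi0 e); first by exists ei.
  by move=> g; change (e (phi (ei (e g))) = e (phi g)); rewrite eK.
have [m [psi [Hinj I2]]] := main_free phi0.
exists (freegrp m), psi; split; first by exists m; exact: isomorphic_refl.
split => //; exact: isomorphic_trans I1 I2.
Qed.
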